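(* Let $p$ be a prime, $R=\mathbb Z_{(p)}$ the localization of $\mathbb Z$ at $(p)$, and $\mathbb Z(p^\infty)=\mathbb Q/R$ the Prüfer group. Then the elements $\left(\frac{1}{p^{nt}}+R\right)_{n\ge1}$, $t\in\mathbb N^*$, of $(\mathbb Z(p^\infty))^{\mathbb N^*}$ are free generators of a free abelian subgroup of infinite rank; consequently $\mathbb Q\oplus(\mathbb Z(p^\infty))^{\mathbb N^*}\cong(\mathbb Z(p^\infty))^{\mathbb N^*}$ as $R$-modules. (Here $\mathbb Q$ and $\mathbb Z(p^\infty)$ are uniserial $R$-modules with local endomorphism rings, $[\mathbb Q]_m\neq[\mathbb Z(p^\infty)]_m$ and $[\mathbb Q]_e\ne[\mathbb Z(p^\infty)]_e$, so no bijections $\mathbb N\to\mathbb N^*$ preserve monogeny or epigeny classes between the families $\{\mathbb Q,\mathbb Z(p^\infty),\mathbb Z(p^\infty),\dots\}$ and $\{\mathbb Z(p^\infty),\mathbb Z(p^\infty),\dots\}$.)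
   Context: $\mathbb N^*$ denotes the set of positive integers. $[M]_m=[N]_m$ means there exist monomorphisms $M\to N$, $N\to M$; $[M]_e=[N]_e$ means there exist epimorphisms $M\to N$, $N\to M$. *)

(* Defs.v *)
From HB Require Import structures.
From mathcomp Require Import all_boot all_order all_algebra.
Set Implicit Arguments. Unset Strict Implicit. Unset Printing Implicit Defensive.
Import Order.TTheory GRing.Theory Num.Theory.
Local Open Scope ring_scope.

(* R = Z_(p) inside Q: rationals whose reduced denominator is prime to p. *)
Definition inR (p : nat) (q : rat) : bool := ~~ (p %| `|denq q|)%N.

(* Z(p^oo) = Q / R, represented by rational representatives:
   a and b represent the same element iff a - b \in R. *)
Definition pequiv (p : nat) (a b : rat) : Prop := inR p (a - b).

(* (Z(p^oo))^{N*}: sequences of representatives; index k : nat stands for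
   n = k+1 \in N*.  Equality is componentwise equality in Q/R. *)
Definition seqequiv (p : nat) (s s' : nat -> rat) : Prop :=
  forall k, pequiv p (s k) (s' k).

Definition srcequiv (p : nat) (u v : rat * (nat -> rat)) : Prop :=
  u.1 = v.1 /\ seqequiv p u.2 v.2.

Definition xgen (p t : nat) : nat -> rat :=
  fun k => ((p%:R : rat) ^+ (k.+1 * t))^-1.

(* f (on representatives) induces an R-module isomorphism
   Q (+) (Z(p^oo))^{N*} -> (Z(p^oo))^{N*}: well defined, additive,
   R-linear, injective and surjective on the quotients. *)
Definition Rmod_iso (p : nat) (f : rat * (nat -> rat) -> nat -> rat) : Prop :=
  [/\ (forall u v, srcequiv p u v -> seqequiv p (f u) (f v)),
      (forall u v, seqequiv p (f (u.1 + v.1, fun k => u.2 k + v.2 k))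
                              (fun k => f u k + f v k)),
      (forall r u, inR p r ->
          seqequiv p (f (r * u.1, fun k => r * u.2 k)) (fun k => r * f u k)),
      (forall u v, seqequiv p (f u) (f v) -> srcequiv p u v)
    & (forall y, exists u, seqequiv p (f u) y)].

(* Main.v *)
Require Import Defs.
From HB Require Import structures.
From mathcomp Require Import all_boot all_order all_algebra.
From mathcomp Require Import ring.
From mathcomp Require Import boolp.
From Stdlib Require Cantor.
Import Order.TTheory GRing.Theory Num.Theory.
Local Open Scope ring_scope.

Lemma inR_of (p : nat) (hp : prime p) (q : rat) (a d : int) :
  ~~ (p %| `|d|)%N -> q * d%:~R = a%:~R -> inR p q.
Proof.
move=> pd hq; rewrite /inR; apply/negP => pe.
have e1 : (numq q * d)%:~R = (a * denq q)%:~R :> rat.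
  by rewrite !intrM numqE -hq mulrAC.
have e2 : (numq q * d) = (a * denq q) by apply: (intr_inj e1).
have e3 : (`|numq q| * `|d| = `|a| * `|denq q|)%N by rewrite -!abszM e2.
have : (p %| `|numq q| * `|d|)%N by rewrite e3 dvdn_mull.
rewrite Euclid_dvdM // (negbTE pd) orbF => pn.
have := coprime_num_den q; move/(coprime_dvdl pn).
by rewrite prime_coprime // pe.
Qed.

Lemma inR_to (p : nat) (q : rat) : inR p q ->
  exists a d : int, ~~ (p %| `|d|)%N /\ q * d%:~R = a%:~R.
Proof. by move=> h; exists (numq q), (denq q); rewrite numqE. Qed.

Lemma inR_divp (p : nat) (hp : prime p) (x : rat) (m : nat) (a : int) :
  inR p x -> x * (p ^ m)%:R = a%:~R -> (p ^ m %| `|a|)%N.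
Proof.
move=> /inR_to [b [d [pd hb]]] hx.
have e1 : (a * d)%:~R = (b * (p ^ m)%:R)%:~R :> rat.
  by rewrite !intrM -hx -hb mulrAC mulrz_nat.
have e2 := intr_inj e1.
have e3 : (`|a| * `|d| = `|b| * p ^ m)%N.
  by rewrite -!abszM e2 abszM natz.
have : (p ^ m %| `|a| * `|d|)%N by rewrite e3 dvdn_mull.
by rewrite Gauss_dvdl // coprimeXl // prime_coprime.
Qed.

Lemma inR_int (p : nat) (hp : prime p) (z : int) : inR p z%:~R.
Proof. apply: (@inR_of p hp _ z 1) => //; last by rewrite mulr1.
by rewrite absz1 dvdn1; apply/eqP => h; move: hp; rewrite h. Qed.

Lemma inR_add (p : nat) (hp : prime p) x y : inR p x -> inR p y -> inR p (x + y).
Proof.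
move=> /inR_to [a [d [pd hx]]] /inR_to [b [e [pe hy]]].
apply: (@inR_of p hp _ (a * e + b * d) (d * e)).
  by rewrite abszM Euclid_dvdM // negb_or pd pe.
by rewrite intrD !intrM -hx -hy; ring.
Qed.

Lemma inR_mul (p : nat) (hp : prime p) x y : inR p x -> inR p y -> inR p (x * y).
Proof.
move=> /inR_to [a [d [pd hx]]] /inR_to [b [e [pe hy]]].
apply: (@inR_of p hp _ (a * b) (d * e)).
  by rewrite abszM Euclid_dvdM // negb_or pd pe.
by rewrite !intrM -hx -hy; ring.
Qed.

Lemma inR_opp (p : nat) (hp : prime p) x : inR p x -> inR p (- x).
Proof.
move=> h; rewrite -mulN1r; apply: inR_mul => //.
have -> : (-1 : rat) = (-1 : int)%:~R by rewrite intrN.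
exact: inR_int.
Qed.

Lemma inR_sub (p : nat) (hp : prime p) x y : inR p x -> inR p y -> inR p (x - y).
Proof. by move=> hx hy; apply: inR_add => //; apply: inR_opp. Qed.

Lemma inR_0 (p : nat) (hp : prime p) : inR p 0.
Proof. by have := @inR_int p hp 0. Qed.

Lemma inR_nat (p : nat) (hp : prime p) (n : nat) : inR p n%:R.
Proof. by have := @inR_int p hp n; rewrite pmulrn. Qed.

Lemma inR_sum (p : nat) (hp : prime p) (I : Type) (r : seq I) (P : pred I) (F : I -> rat) :
  (forall i, P i -> inR p (F i)) -> inR p (\sum_(i <- r | P i) F i).
Proof.
move=> h; apply: (big_ind (inR p)) => //; first exact: inR_0.
by move=> x y; apply: inR_add.
Qed.

Lemma top_zero (p : nat) (hp : prime p) (N : nat) (c : nat -> int) :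
  (forall k, inR p (\sum_(1 <= t < N.+2) (c t)%:~R * xgen p t k)) -> c N.+1 = 0.
Proof.
move=> h.
set k := `|c N.+1|%N.
pose S := \sum_(1 <= t < N.+1) (c t)%:~R * xgen p t k.
have hS : inR p (S + (c N.+1)%:~R * xgen p N.+1 k).
  by have := h k; rewrite big_nat_recr.
set P : rat := p%:R.
have P0 : P != 0 by rewrite pnatr_eq0; apply/eqP => p0; move: hp; rewrite p0.
have hI : inR p (S * P ^+ (k.+1 * N)).
  rewrite /S mulr_suml big_nat_cond; apply: (@inR_sum p hp nat _ (fun i => (1 <= i < N.+1)%N && true)) => t /andP [/andP [t1 tN] _].
  rewrite /xgen.
  have -> : P ^+ (k.+1 * N) = P ^+ (k.+1 * t) * P ^+ (k.+1 * (N - t)).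
    by rewrite -exprD -mulnDr subnKC // -ltnS.
  rewrite -mulrA mulKf ?expf_neq0 //.
  apply: inR_mul => //; first exact: inR_int.
  by rewrite -natrX; apply: inR_nat.
have hT : inR p ((c N.+1)%:~R / P ^+ k.+1).
  have e : (c N.+1)%:~R / P ^+ k.+1 =
     (S + (c N.+1)%:~R * xgen p N.+1 k) * P ^+ (k.+1 * N) - S * P ^+ (k.+1 * N).
    rewrite /xgen mulnS exprD; field.
    by rewrite !expf_neq0.
  rewrite e; apply: inR_sub => //; apply: inR_mul => //.
  by rewrite -natrX; apply: inR_nat.
have := @inR_divp p hp _ k.+1 (c N.+1) hT.
rewrite natrX -/P mulfVK ?expf_neq0 // => /(_ erefl) hd.
have lt : (k < p ^ k.+1)%N.
  apply: ltn_trans (ltn_expl _ _); first exact: ltnSn.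
  exact: prime_gt1.
apply/eqP; rewrite -absz_eq0 -/k; apply/negP => /negP; rewrite -lt0n => k0.
by have := dvdn_leq k0 hd; rewrite leqNgt lt.
Qed.

Lemma part1 (p : nat) (hp : prime p) :
  forall (N : nat) (c : nat -> int),
      seqequiv p (fun k => \sum_(1 <= t < N.+1) (c t)%:~R * xgen p t k)
                 (fun _ => 0) ->
      forall t, (1 <= t <= N)%N -> c t = 0.
Proof.
elim=> [|N IH] c h t /andP [t1 tN].
  by move: (leq_trans t1 tN).
have cN : c N.+1 = 0.
  by apply: (@top_zero p hp N c) => k; have := h k; rewrite /pequiv subr0.
rewrite leq_eqVlt in tN; case/orP: tN => [/eqP -> //|tN].
apply: IH => //.
move=> k; have := h k; rewrite /pequiv big_nat_recr //= cN mulr0z mul0r addr0.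
move=> H; rewrite subr0; by rewrite addr0 in H.
by rewrite t1 -ltnS.
Qed.

Definition iota1 (p : nat) : nat -> rat := fun i => ((p%:R : rat) ^+ i.+1)^-1.

Definition blk (y : nat -> rat) (j : nat) : nat -> rat :=
  fun i => y (Cantor.to_nat (j, i)).

Definition prev (rho : (nat -> rat) -> rat) (u : rat * (nat -> rat)) (j : nat) : rat :=
  match j with 0%N => u.1 | j'.+1 => rho (blk u.2 j') end.

Definition fmap (p : nat) (rho : (nat -> rat) -> rat) (u : rat * (nat -> rat)) : nat -> rat :=
  fun k => u.2 k + (prev rho u (Cantor.of_nat k).1 - rho (blk u.2 (Cantor.of_nat k).1))
                   * iota1 p (Cantor.of_nat k).2.

Section Abstract.
Variables (p : nat) (hp : prime p) (rho : (nat -> rat) -> rat).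
Hypothesis rho0 : forall a, (forall k, inR p (a k)) -> rho a = 0.
Hypothesis rhoD : forall a b, rho (fun k => a k + b k) = rho a + rho b.
Hypothesis rhoZ : forall c a, rho (fun k => c * a k) = c * rho a.
Hypothesis rhoI : rho (iota1 p) = 1.

Lemma rho_ext a b : (forall k, a k = b k) -> rho a = rho b.
Proof. by move=> h; congr rho; apply: funext. Qed.

Lemma rhoB a b : rho (fun k => a k - b k) = rho a - rho b.
Proof.
rewrite (@rho_ext _ (fun k => a k + (-1) * b k)); last by move=> k; rewrite mulN1r.
by rewrite rhoD rhoZ mulN1r.
Qed.

Lemma rhoL a c : rho (fun k => a k + c * iota1 p k) = rho a + c.
Proof. by rewrite rhoD rhoZ rhoI mulr1. Qed.

Lemma prevD u v j :
  prev rho (u.1 + v.1, fun k => u.2 k + v.2 k) j = prev rho u j + prev rho v j.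
Proof. by case: j => [|j] //=; rewrite /blk rhoD. Qed.

Lemma prevZ r u j :
  prev rho (r * u.1, fun k => r * u.2 k) j = r * prev rho u j.
Proof. by case: j => [|j] //=; rewrite /blk rhoZ. Qed.

Lemma prevB u v j :
  prev rho (u.1 - v.1, fun k => u.2 k - v.2 k) j = prev rho u j - prev rho v j.
Proof. by case: j => [|j] //=; rewrite /blk rhoB. Qed.

Lemma fD u v k :
  fmap p rho (u.1 + v.1, fun k => u.2 k + v.2 k) k = fmap p rho u k + fmap p rho v k.
Proof.
rewrite /fmap prevD /=.
have -> : rho (blk (fun k => u.2 k + v.2 k) (Cantor.of_nat k).1) =
   rho (blk u.2 (Cantor.of_nat k).1) + rho (blk v.2 (Cantor.of_nat k).1).
  by rewrite /blk rhoD.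
ring.
Qed.

Lemma fZ r u k :
  fmap p rho (r * u.1, fun k => r * u.2 k) k = r * fmap p rho u k.
Proof.
rewrite /fmap prevZ /=.
have -> : rho (blk (fun k => r * u.2 k) (Cantor.of_nat k).1) =
   r * rho (blk u.2 (Cantor.of_nat k).1).
  by rewrite /blk rhoZ.
ring.
Qed.

Lemma fB u v k :
  fmap p rho (u.1 - v.1, fun k => u.2 k - v.2 k) k = fmap p rho u k - fmap p rho v k.
Proof.
rewrite /fmap prevB /=.
have -> : rho (blk (fun k => u.2 k - v.2 k) (Cantor.of_nat k).1) =
   rho (blk u.2 (Cantor.of_nat k).1) - rho (blk v.2 (Cantor.of_nat k).1).
  by rewrite /blk rhoB.
ring.
Qed.

Lemma rho_blk_f w j : rho (blk (fmap p rho w) j) = prev rho w j.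
Proof.
rewrite (@rho_ext _ (fun i => blk w.2 j i + (prev rho w j - rho (blk w.2 j)) * iota1 p i)).
  by rewrite rhoL addrC subrK.
by move=> i; rewrite /blk /fmap Cantor.cancel_of_to.
Qed.

Lemma f_kernel w : (forall k, inR p (fmap p rho w k)) -> w.1 = 0 /\ forall k, inR p (w.2 k).
Proof.
move=> h.
have hprev j : prev rho w j = 0.
  by rewrite -rho_blk_f; apply: rho0 => i; apply: h.
split; first exact: (hprev 0%N).
move=> k; have := h k; rewrite /fmap hprev.
by move: (hprev (Cantor.of_nat k).1.+1) => /= ->; rewrite subrr mul0r addr0.
Qed.

Lemma f_iso : Rmod_iso p (fmap p rho).
Proof.
split.
- move=> u v [e1 e2] k; rewrite /pequiv -fB.
  set w := (_, _).
  have w1 : w.1 = 0 by rewrite /w /= e1 subrr.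
  have w2 : forall k, inR p (w.2 k) by move=> k'; exact: e2.
  have hprev j : prev rho w j = 0.
    by case: j => [|j] //=; apply: rho0 => i; apply: w2.
  rewrite /fmap hprev; move: (hprev (Cantor.of_nat k).1.+1) => /= ->.
  rewrite subrr mul0r addr0.
  exact: w2.
- by move=> u v k; rewrite /pequiv fD subrr; apply: inR_0.
- by move=> r u _ k; rewrite /pequiv fZ subrr; apply: inR_0.
- move=> u v h.
  have := @f_kernel (u.1 - v.1, fun k => u.2 k - v.2 k).
  case.
    by move=> k; rewrite fB; apply: h.
  by move=> /= /eqP; rewrite subr_eq0 => /eqP e1 e2; split.
- move=> y.
  pose t j := rho (blk y j).
  pose u := (t 0%N, fun k => y k + (t (Cantor.of_nat k).1.+1 - t (Cantor.of_nat k).1)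
                                  * iota1 p (Cantor.of_nat k).2).
  have hb j : rho (blk u.2 j) = t j.+1.
    rewrite (@rho_ext _ (fun i => blk y j i + (t j.+1 - t j) * iota1 p i)).
      by rewrite rhoL addrC subrK.
    by move=> i; rewrite /blk /u; unfold snd; cbv beta iota; rewrite Cantor.cancel_of_to.
  have hp' j : prev rho u j = t j by case: j => [|j] //=; rewrite hb.
  exists u => k; rewrite /pequiv /fmap hp' hb /u /=.
  rewrite [X in inR p X](_ : _ = 0); first exact: inR_0.
  ring.
Qed.

End Abstract.

From mathcomp Require Import classical_sets.
From Stdlib Require ClassicalEpsilon.

Definition Wset (p : nat) (a : nat -> rat) : Prop :=
  exists N0 : nat, (0 < N0)%N /\ forall i, inR p (N0%:R * a i).

Definition good (p : nat) (A : (nat -> rat) -> Prop) : Prop :=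
  [/\ (forall x y, A x -> A y -> A (fun i => x i + y i)),
      (forall c x, A x -> A (fun i => c * x i)),
      (forall a, Wset p a -> A a) & ~ A (iota1 p)].

Lemma iota_notW (p : nat) (hp : prime p) : ~ Wset p (iota1 p).
Proof.
move=> [N0 [N0pos h]].
have := h N0; rewrite /iota1 => hx.
have := @inR_divp p hp _ N0.+1 N0 hx.
rewrite -natrX mulfVK; last by rewrite pnatr_eq0 expn_eq0 negb_and; apply/orP; left;
  apply/eqP => p0; move: hp; rewrite p0.
move=> /(_ (pmulrn _ _)) hd.
have lt : (N0 < p ^ N0.+1)%N.
  apply: ltn_trans (ltn_expl _ _); first exact: ltnSn.
  exact: prime_gt1.
by have := dvdn_leq N0pos hd; rewrite leqNgt lt.
Qed.

Lemma W_good (p : nat) (hp : prime p) : good p (Wset p).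
Proof.
split.
- move=> x y [N1 [N1p h1]] [N2 [N2p h2]]; exists (N1 * N2)%N; split.
    by rewrite muln_gt0 N1p N2p.
  move=> i; rewrite natrM.
  have -> : N1%:R * N2%:R * (x i + y i) = N2%:R * (N1%:R * x i) + N1%:R * (N2%:R * y i)
    by ring.
  by apply: inR_add => //; apply: inR_mul => //; apply: inR_nat.
- move=> c x [N0 [N0p h]]; exists (`|denq c| * N0)%N; split.
    by rewrite muln_gt0 N0p absz_gt0 denq_neq0.
  move=> i; rewrite natrM.
  have -> : (`|denq c|%:R : rat) = (denq c)%:~R.
    by rewrite -[in RHS]absz_denq pmulrn.
  have -> : (denq c)%:~R * N0%:R * (c * x i) = (c * (denq c)%:~R) * (N0%:R * x i) by ring.
  by rewrite -numqE; apply: inR_mul => //; apply: inR_int.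
- by [].
- exact: iota_notW.
Qed.

Section ZornPart.
Local Open Scope classical_set_scope.

Lemma good_mem (p : nat) (F : set (set (nat -> rat))) X x :
  F `<=` (fun A => A = set0 \/ good p A) -> F X -> X x -> good p X.
Proof. by move=> FP FX Xx; case: (FP X FX) => // X0; move: Xx; rewrite X0. Qed.

Lemma exists_M (p : nat) (hp : prime p) : exists M : set (nat -> rat),
  good p M /\ forall v, exists c, M (fun i => v i - c * iota1 p i).
Proof.
pose PP := fun A : set (nat -> rat) => A = set0 \/ good p A.
have [M [PM Mmax]] : exists A, PP A /\ forall B, A `<` B -> ~ PP B.
  apply: Zorn_bigcup => F FP Ftot.
  case: (pselect (exists X x, F X /\ X x)) => [[X0 [x0 [FX0 X0x0]]]|H].
  - right; have gX0 := @good_mem p F _ _ FP FX0 X0x0; split.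
    + move=> x y [X1 FX1 X1x] [X2 FX2 X2y].
      have g1 := @good_mem p F _ _ FP FX1 X1x; have g2 := @good_mem p F _ _ FP FX2 X2y.
      case: (Ftot _ _ FX1 FX2) => s.
        exists X2 => //; case: g2 => hadd _ _ _; apply: hadd => //; exact: s.
      exists X1 => //; case: g1 => hadd _ _ _; apply: hadd => //; exact: s.
    + move=> c x [X1 FX1 X1x]; have g1 := @good_mem p F _ _ FP FX1 X1x.
      by exists X1 => //; case: g1 => _ hs _ _; apply: hs.
    + by move=> a Wa; exists X0 => //; case: gX0 => _ _ hw _; apply: hw.
    + move=> [X1 FX1 X1i]; have g1 := @good_mem p F _ _ FP FX1 X1i.
      by case: g1.
  - left; apply/seteqP; split => x //= [X FX Xx]; apply: H; exists X, x; done.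
have gM : good p M.
  case: PM => // M0; exfalso; apply: (Mmax (Wset p)); last by right; apply: W_good.
  split; first by move=> x; rewrite M0.
  move=> sub.
  have : Wset p (fun _ => 0).
    by exists 1%N; split => // i; rewrite mulr0; apply: inR_0.
  by move/sub; rewrite M0.
exists M; split => // v; apply: contrapT => nex.
case: gM => hadd hsc hW hi.
pose B := fun z : nat -> rat => exists m d, M m /\ z = (fun i => m i + d * v i).
have M0 : M (fun _ => 0).
  by apply: hW; exists 1%N; split => // i; rewrite mulr0; apply: inR_0.
apply: (Mmax B).
  split.
    move=> m Mm; exists m, 0; split => //; apply: funext => i; by rewrite mul0r addr0.
  move=> sub; apply: nex; exists 0.
  have Bv : B v by exists (fun _ => 0), 1; split => //; apply: funext => i; rewrite add0r mul1r.
  have Mv := sub _ Bv.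
  by move: Mv; congr M; apply: funext => i; rewrite mul0r subr0.
right; split.
- move=> x y [m1 [d1 [M1 ->]]] [m2 [d2 [M2 ->]]].
  exists (fun i => m1 i + m2 i), (d1 + d2); split; first exact: hadd.
  by apply: funext => i; ring.
- move=> c x [m1 [d1 [M1 ->]]].
  exists (fun i => c * m1 i), (c * d1); split; first exact: hsc.
  by apply: funext => i; ring.
- move=> a Wa; exists a, 0; split; first exact: hW.
  by apply: funext => i; rewrite mul0r addr0.
- move=> [m [d [Mm e]]].
  have [d0|dn0] := eqVneq d 0.
    apply: hi; move: Mm; congr M; rewrite e d0; apply: funext => i.
    by rewrite mul0r addr0.
  apply: nex; exists d^-1.
  have : M (fun i => (- d^-1) * m i) by apply: hsc.
  congr M; apply: funext => i.
  have ei : iota1 p i = m i + d * v i by rewrite e.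
  rewrite ei; field; exact: dn0.
Qed.

End ZornPart.

Lemma exists_rho (p : nat) (hp : prime p) : exists rho : (nat -> rat) -> rat,
  [/\ (forall a, (forall k, inR p (a k)) -> rho a = 0),
      (forall a b, rho (fun k => a k + b k) = rho a + rho b),
      (forall c a, rho (fun k => c * a k) = c * rho a) &
      rho (iota1 p) = 1].
Proof.
have [M [gM hM]] := @exists_M p hp; case: gM => hadd hsc hW hi.
pose rho v := ClassicalEpsilon.epsilon (inhabits (0 : rat))
                (fun c => M (fun i => v i - c * iota1 p i)).
have rhoP v : M (fun i => v i - rho v * iota1 p i).
  exact: (ClassicalEpsilon.epsilon_spec (inhabits (0 : rat)) _ (hM v)).
have Mext x y : M x -> (forall i, x i = y i) -> M y.
  by move=> Mx h; have <- : x = y by apply: funext.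
have uniq v c : M (fun i => v i - c * iota1 p i) -> rho v = c.
  move=> Mc; apply/eqP; apply/negP => /negP ne.
  have : M (fun i => (rho v - c)^-1 * ((v i - c * iota1 p i) + (-1) * (v i - rho v * iota1 p i))).
    by apply: (hsc); apply: (hadd) => //; apply: (hsc).
  move/Mext => /(_ (iota1 p)) h; apply: hi; apply: h => i.
  have ne' : rho v - c != 0 by rewrite subr_eq0.
  by field.
exists rho; split.
- move=> a ha; apply: uniq; apply: (Mext a); first by apply: hW; exists 1%N; split => // i; rewrite mul1r.
  by move=> i; rewrite mul0r subr0.
- move=> a b; apply: uniq.
  apply: (Mext _ _ (hadd _ _ (rhoP a) (rhoP b))) => i; ring.
- move=> c a; apply: uniq.
  apply: (Mext _ _ (hsc c _ (rhoP a))) => i; ring.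
- apply: uniq; apply: (Mext (fun _ => 0)).
    by apply: hW; exists 1%N; split => // i; rewrite mulr0; apply: inR_0.
  by move=> i; rewrite mul1r subrr.
Qed.

Theorem mainTheorem8 (p : nat) (hp : prime p) :
  (forall (N : nat) (c : nat -> int),
      seqequiv p (fun k => \sum_(1 <= t < N.+1) (c t)%:~R * xgen p t k)
                 (fun _ => 0) ->
      forall t, (1 <= t <= N)%N -> c t = 0)
  /\
  (exists f : rat * (nat -> rat) -> nat -> rat, Rmod_iso p f).
Proof.
split; first exact: (@part1 p hp).
have [rho [h0 hD hZ hI]] := @exists_rho p hp.
exists (fmap p rho); exact: (@f_iso p hp rho h0 hD hZ hI).
Qed.
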